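(* Let $P$ and $Q$ be finite posets. If $P$ and $Q$ are both mCDE, then the direct product $P\times Q$ is mCDE.
   Context: All posets are finite. $\mathbb{E}(\mu;f)=\sum_p f(p)\mathbb{P}(\mu;p)$. $\mathrm{ddeg}(p)$ is the number of elements covered by $p$; $\mathrm{uni}$ is the uniform distribution. A $k$-chain is $c_0<\cdots<c_k$; $\mathrm{chain}(k)$ gives $p$ probability $\#\{k\text{-chains }c\ni p\}/((k+1)\#\{k\text{-chains}\})$. If $r$ is the length of a longest chain in a poset $R$, $R$ is mCDE if $\mathbb{E}(\mathrm{chain}(k)_R;\mathrm{ddeg})=\mathbb{E}(\mathrm{uni}_R;\mathrm{ddeg})$ for all $k=0,\ldots,r$. $P\times Q$ has $(p,q)\le(p',q')$ iff $p\le_P p'$ and $q\le_Q q'$. *)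

(* Defs.v *)
From HB Require Import structures.
From mathcomp Require Import all_boot all_order all_algebra.
Set Implicit Arguments. Unset Strict Implicit. Unset Printing Implicit Defensive.
Import Order.Theory GRing.Theory Num.Theory.

Section MCDE.
Context {d : Order.disp_t} (T : finPOrderType d).
Local Open Scope order_scope.

Definition covers (p q : T) : bool :=
  (q < p) && [forall z : T, ~~ ((q < z) && (z < p))].

Definition ddeg (p : T) : nat := #|[set q : T | covers p q]|.

(* a k-chain c_0 < c_1 < ... < c_k, as a (k+1)-tuple *)
Definition is_chain (k : nat) (c : k.+1.-tuple T) : bool := sorted <%O (val c).

Definition nchains (k : nat) : nat := #|[set c : k.+1.-tuple T | is_chain c]|.

Definition nchains_at (k : nat) (p : T) : nat :=
  #|[set c : k.+1.-tuple T | is_chain c && (p \in val c)]|.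

Definition poset_height : nat :=
  (\max_(k < #|T|) (if 0 < nchains k then val k else 0))%N.

Local Open Scope ring_scope.

Definition uni (p : T) : rat := #|T|%:R^-1.

Definition chain_dist (k : nat) (p : T) : rat :=
  (nchains_at k p)%:R / ((k.+1)%:R * (nchains k)%:R).

Definition expect (mu : T -> rat) (f : T -> nat) : rat :=
  \sum_(p : T) (f p)%:R * mu p.

Definition mCDE : Prop :=
  forall k : nat, (k <= poset_height)%N ->
    expect (chain_dist k) ddeg = expect uni ddeg.

End MCDE.

(* Main.v *)
Require Import Defs.
From HB Require Import structures.
From mathcomp Require Import all_boot all_order all_algebra.
From mathcomp Require Import ring.
Import Order.Theory GRing.Theory Num.Theory.
Set Implicit Arguments. Unset Strict Implicit. Unset Printing Implicit Defensive.

Lemma sum_tupleS (T : finType) (R : nmodType) n (F : n.+1.-tuple T -> R) :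
  (\sum_(c : n.+1.-tuple T) F c = \sum_(x : T) \sum_(t : n.-tuple T) F [tuple of x :: t])%R.
Proof.
rewrite pair_bigA /=.
rewrite (reindex (fun p : T * n.-tuple T => [tuple of p.1 :: p.2])) //=.
exists (fun c : n.+1.-tuple T => (thead c, behead_tuple c)).
  by move=> [x t] _ /=; rewrite theadE; congr pair; apply: val_inj.
by move=> c _; case/tupleP: c => x t; apply: val_inj.
Qed.

Lemma sum_tuple0 (T : finType) (R : nmodType) (F : 0.-tuple T -> R) :
  (\sum_(c : 0.-tuple T) F c = F [tuple])%R.
Proof.
rewrite (big_pred1 [tuple]) // => t /=; apply/esym/eqP; exact: tuple0.
Qed.

Lemma card_sum (T : finType) (P : pred T) :
  (#|[set c | P c]|%:R = \sum_c (P c)%:R :> rat)%R.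
Proof.
rewrite -sum1dep_card natr_sum big_mkcond /=; apply: eq_bigr => c _.
by case: (P c).
Qed.

Section Gen.
Context {d : Order.disp_t} (T : finPOrderType d).
Local Open Scope ring_scope.

Definition dch k (z : T) : rat :=
  \sum_(c : k.+1.-tuple T) (thead c == z)%:R * (is_chain c)%:R.
Definition Ech k (x z : T) : rat :=
  \sum_(c : k.+1.-tuple T) (thead c == z)%:R * ((is_chain c)%:R * (x \in val c)%:R).

Lemma chain_cons k x (t : k.+1.-tuple T) :
  is_chain [tuple of x :: t] = (x < thead t)%O && is_chain t.
Proof. by case/tupleP: t => y t. Qed.

Lemma chain_cons_notin k x (t : k.+1.-tuple T) :
  is_chain [tuple of x :: t] -> x \notin val t.
Proof.
rewrite /is_chain /=; move=> H; apply/negP => xt.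
have := order_path_min (@lt_trans _ T) H.
by move/allP/(_ x xt); rewrite ltxx.
Qed.

Lemma sum_head k z (G : k.+2.-tuple T -> rat) :
  \sum_(c : k.+2.-tuple T) (thead c == z)%:R * G c = \sum_(t : k.+1.-tuple T) G [tuple of z :: t].
Proof.
rewrite sum_tupleS (bigD1 z) //= [X in _ + X]big1 ?addr0.
  by apply: eq_bigr => t _; rewrite theadE eqxx mul1r.
move=> x /negbTE xz; apply: big1 => t _; by rewrite theadE xz mul0r.
Qed.

Lemma sum_next k z (H : k.+1.-tuple T -> rat) :
  \sum_(t : k.+1.-tuple T) (is_chain [tuple of z :: t])%:R * H t =
  \sum_(y | (z < y)%O) \sum_(t : k.+1.-tuple T) (thead t == y)%:R * ((is_chain t)%:R * H t).
Proof.
rewrite exchange_big /=; apply: eq_bigr => t _.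
rewrite (chain_cons z t); case: (boolP (z < thead t)%O) => zt /=.
  rewrite (bigD1 (thead t)) //= eqxx mul1r big1 ?addr0.
    by case: (is_chain t); rewrite ?mul1r ?mul0r.
  by move=> y /andP[_ /negbTE]; rewrite eq_sym => ->; rewrite mul0r.
rewrite big1 ?mul0r // => y zy; case: eqP => [ty|]; last by rewrite mul0r.
by move: zt; rewrite ty zy.
Qed.

Lemma dch0 z : dch 0 z = 1.
Proof.
rewrite /dch sum_tupleS (bigD1 z) //= sum_tuple0 theadE eqxx [X in _ + X]big1 ?addr0.
  by rewrite /is_chain /= mulr1.
by move=> x /negbTE xz; rewrite sum_tuple0 theadE xz mul0r.
Qed.

Lemma Ech0 x z : Ech 0 x z = (x == z)%:R.
Proof.
rewrite /Ech sum_tupleS (bigD1 z) //= sum_tuple0 theadE eqxx [X in _ + X]big1 ?addr0.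
  by rewrite mul1r /is_chain /= in_cons in_nil orbF mul1r.
by move=> y /negbTE xz; rewrite sum_tuple0 theadE xz mul0r.
Qed.

Lemma dchS k z : dch k.+1 z = \sum_(y | (z < y)%O) dch k y.
Proof.
rewrite /dch (sum_head z (fun c => (is_chain c)%:R)).
transitivity (\sum_(t : k.+1.-tuple T) (is_chain [tuple of z :: t])%:R * (fun _ => 1 : rat) t).
  by apply: eq_bigr => t _; rewrite mulr1.
rewrite sum_next; apply: eq_bigr => y _; apply: eq_bigr => t _; by rewrite mulr1.
Qed.

Lemma EchS k x z :
  Ech k.+1 x z = \sum_(y | (z < y)%O) Ech k x y + (x == z)%:R * dch k.+1 z.
Proof.
rewrite /Ech (sum_head z (fun c => (is_chain c)%:R * (x \in val c)%:R)).
rewrite /dch (sum_head z (fun c => (is_chain c)%:R)) mulr_sumr.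
rewrite -(sum_next z (fun t => (x \in val t)%:R)) -big_split /=.
apply: eq_bigr => t _.
case: (boolP (is_chain [tuple of z :: t])) => ch; last by rewrite !mul0r mulr0 addr0.
rewrite !mul1r mulr1 inE.
case: (eqVneq x z) => [->|_]; last by rewrite addr0.
by rewrite (negbTE (chain_cons_notin ch)).
Qed.

Lemma sum_thead k (G : k.+1.-tuple T -> rat) :
  \sum_z \sum_(c : k.+1.-tuple T) (thead c == z)%:R * G c = \sum_c G c.
Proof.
rewrite exchange_big /=; apply: eq_bigr => c _.
rewrite (bigD1 (thead c)) //= eqxx mul1r big1 ?addr0 //.
by move=> y /negbTE; rewrite eq_sym => ->; rewrite mul0r.
Qed.

Lemma nchains_dch k : (nchains T k)%:R = \sum_z dch k z.
Proof.
rewrite /nchains card_sum /dch (sum_thead (fun c => (is_chain c)%:R)) //.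
Qed.

Lemma nchains_at_Ech k x : (nchains_at k x)%:R = \sum_z Ech k x z.
Proof.
rewrite /nchains_at card_sum /Ech (sum_thead (fun c => (is_chain c)%:R * (x \in val c)%:R)).
by apply: eq_bigr => c _; case: (is_chain c); case: (x \in val c); rewrite ?mulr0 ?mulr1.
Qed.

Lemma dch_ge0 k z : 0 <= dch k z.
Proof. by apply: sumr_ge0 => c _; rewrite mulr_ge0 ?ler0n. Qed.

Lemma Ech_ge0 k x z : 0 <= Ech k x z.
Proof. by apply: sumr_ge0 => c _; rewrite !mulr_ge0 ?ler0n. Qed.

Lemma sum_le_split (f : T -> rat) z :
  \sum_(y | (z <= y)%O) f y = f z + \sum_(y | (z < y)%O) f y.
Proof.
rewrite (bigD1 z) //=; congr (_ + _); apply: eq_bigl => y.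
by rewrite lt_def andbC eq_sym.
Qed.

Lemma sumEch k z : \sum_x Ech k x z = (k.+1)%:R * dch k z.
Proof.
elim: k z => [|k IH] z.
  rewrite dch0 mulr1 (bigD1 z) //= Ech0 eqxx big1 ?addr0 // => x /negbTE xz.
  by rewrite Ech0 xz.
under eq_bigr do rewrite EchS.
rewrite big_split /= exchange_big /=.
under eq_bigr do rewrite IH.
rewrite -mulr_sumr -dchS -mulr_suml (bigD1 z) //= eqxx [X in _ + (_ + X) * _]big1 ?addr0.
  by rewrite -[in RHS](addn1 k.+1) natrD mulrDl mul1r.
by move=> x /negbTE ->.
Qed.

Fixpoint md n (z : T) : rat :=
  if n is n'.+1 then \sum_(y | (z <= y)%O) md n' y else 1.

Fixpoint ME n (x z : T) : rat :=
  if n is n'.+1 then \sum_(y | (z <= y)%O) ME n' x y + (x == z)%:R * md n z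
  else (x == z)%:R.

Lemma md_dch n z : md n z = \sum_(j < n.+1) 'C(n, j)%:R * dch j z.
Proof.
elim: n z => [|n IH] z; first by rewrite big_ord1 /= dch0 mul1r.
rewrite /= sum_le_split.
have E : \sum_(y | (z < y)%O) md n y =
  \sum_(j < n.+1) 'C(n, j)%:R * dch j.+1 z.
  rewrite (eq_bigr (fun y => \sum_(j < n.+1) 'C(n, j)%:R * dch j y)); last by move=> y _; rewrite IH.
  rewrite exchange_big /=; apply: eq_bigr => j _; by rewrite -mulr_sumr -dchS.
rewrite E IH [in RHS]big_ord_recl /=.
rewrite [X in _ = _ + X](eq_bigr (fun j : 'I_n.+1 => 'C(n, j.+1)%:R * dch j.+1 z + 'C(n,j)%:R * dch j.+1 z)); last first.
  by move=> j _; rewrite /bump /= add1n binS natrD mulrDl.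
rewrite big_split /= addrA; congr (_ + _).
rewrite big_ord_recl [in RHS]big_ord_recr /= (@bin_small n n.+1) // mul0r addr0 !bin0.
congr (_ + _); apply: eq_bigr => i _; by rewrite /bump /= add1n.
Qed.


Lemma ME_Ech n x z : ME n x z = \sum_(j < n.+1) 'C(n.+1, j.+1)%:R * Ech j x z.
Proof.
elim: n z => [|n IH] z; first by rewrite big_ord1 /= Ech0 mul1r.
rewrite /= sum_le_split.
have E1 : \sum_(y | (z < y)%O) ME n x y =
  \sum_(j < n.+1) 'C(n.+1, j.+1)%:R * Ech j.+1 x z -
  (x == z)%:R * \sum_(j < n.+1) 'C(n.+1, j.+1)%:R * dch j.+1 z.
  rewrite (eq_bigr (fun y => \sum_(j < n.+1) 'C(n.+1, j.+1)%:R * Ech j x y)); last by move=> y _; rewrite IH.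
  rewrite exchange_big mulr_sumr -sumrB /=; apply: eq_bigr => j _.
  by rewrite -mulr_sumr EchS mulrDr [in RHS]mulrCA addrK.
rewrite E1 -/(md n.+1 z) md_dch IH.
set e := (x == z)%:R.
have h1 : \sum_(j < n.+2) 'C(n.+1, j)%:R * dch j z =
   1 + \sum_(j < n.+1) 'C(n.+1, j.+1)%:R * dch j.+1 z.
  by rewrite big_ord_recl /= bin0 dch0 mul1r.
have h2 : \sum_(j < n.+1) 'C(n.+1, j.+1)%:R * Ech j x z =
   (n.+1)%:R * e + \sum_(j < n) 'C(n.+1, j.+2)%:R * Ech j.+1 x z.
  by rewrite big_ord_recl /= Ech0 bin1.
have h3 : \sum_(j < n.+1) 'C(n.+1, j.+2)%:R * Ech j.+1 x z =
   \sum_(j < n) 'C(n.+1, j.+2)%:R * Ech j.+1 x z.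
  by rewrite big_ord_recr /= bin_small // mul0r addr0.
have h4 : \sum_(j < n.+2) 'C(n.+2, j.+1)%:R * Ech j x z =
   (n.+2)%:R * e + \sum_(j < n.+1) 'C(n.+1, j.+2)%:R * Ech j.+1 x z
   + \sum_(j < n.+1) 'C(n.+1, j.+1)%:R * Ech j.+1 x z.
  rewrite big_ord_recl /= Ech0 bin1 -addrA -big_split /=; congr (_ + _).
  by apply: eq_bigr => j _; rewrite /bump /= add1n binS natrD mulrDl.
rewrite h1 h2 h4 h3 -!natr1; ring.
Qed.


Definition Psi k (w : T -> rat) := \sum_x \sum_z w x * Ech k x z.
Definition Phi n (w : T -> rat) := \sum_x \sum_z w x * ME n x z.

Lemma Phi_Psi n w : Phi n w = \sum_(j < n.+1) 'C(n.+1, j.+1)%:R * Psi j w.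
Proof.
rewrite /Phi /Psi.
under eq_bigr do under eq_bigr do rewrite ME_Ech mulr_sumr.
under eq_bigr do rewrite exchange_big /=.
rewrite exchange_big /=; apply: eq_bigr => j _.
rewrite mulr_sumr; apply: eq_bigr => x _.
rewrite mulr_sumr; apply: eq_bigr => z _.
by rewrite mulrCA.
Qed.

Lemma Psi_zero w : (forall n, Phi n w = 0) -> forall k, Psi k w = 0.
Proof.
move=> H k; elim/ltn_ind: k => k IH.
have := H k; rewrite Phi_Psi big_ord_recr /= binn mul1r big1 ?add0r //.
by move=> j _; rewrite IH ?mulr0.
Qed.

Lemma Psi_one k : Psi k (fun _ => 1) = (k.+1)%:R * (nchains T k)%:R.
Proof.
rewrite /Psi exchange_big nchains_dch mulr_sumr; apply: eq_bigr => z _.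
by rewrite -sumEch; apply: eq_bigr => x _; rewrite mul1r.
Qed.

Lemma PsiB k (w : T -> rat) c :
  Psi k (fun x => w x - c) = Psi k w - c * Psi k (fun _ => 1).
Proof.
rewrite /Psi mulr_sumr -sumrB; apply: eq_bigr => x _.
rewrite mulr_sumr -sumrB; apply: eq_bigr => z _.
by rewrite mulrBl mul1r.
Qed.

Definition avg := expect (@uni _ T) (@ddeg _ T).
Definition gT (x : T) : rat := (ddeg x)%:R - avg.

Lemma expect_chain k :
  expect (chain_dist k) (@ddeg _ T) =
  Psi k (fun x => (ddeg x)%:R) / ((k.+1)%:R * (nchains T k)%:R).
Proof.
rewrite /expect /Psi mulr_suml; apply: eq_bigr => x _.
by rewrite /chain_dist mulrA nchains_at_Ech mulr_sumr.
Qed.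

Lemma nchains0_Ech k : nchains T k = 0%N -> forall x z, Ech k x z = 0.
Proof.
move=> N0 x z.
have /psumr_eq0P Hd : \sum_z dch k z = 0 by rewrite -nchains_dch N0.
have : \sum_x Ech k x z = 0 by rewrite sumEch Hd ?mulr0 // => y _; exact: dch_ge0.
by move/psumr_eq0P; apply => // y _; exact: Ech_ge0.
Qed.

Lemma nchains0_Psi k w : nchains T k = 0%N -> Psi k w = 0.
Proof.
move=> N0; apply: big1 => x _; apply: big1 => z _.
by rewrite nchains0_Ech ?mulr0.
Qed.

Lemma nchains_gt0_height k : (0 < nchains T k)%N -> (k <= poset_height T)%N.
Proof.
move=> Hpos; have := Hpos.
rewrite /nchains card_gt0 => /set0Pn [c]; rewrite inE => ch.
have U := lt_sorted_uniq ch.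
have Hk : (k < #|T|)%N.
  by rewrite -(size_tuple c) -(card_uniqP U) max_card.
have := @leq_bigmax _ (fun i : 'I_#|T| => if (0 < nchains T i)%N then val i else 0%N) (Ordinal Hk).
by rewrite /= Hpos.
Qed.


Lemma nchains_S0 k : nchains T k = 0%N -> nchains T k.+1 = 0%N.
Proof.
move=> N0.
have /psumr_eq0P Hd : \sum_z dch k z = 0 by rewrite -nchains_dch N0.
apply/eqP; rewrite -(eqr_nat rat) nchains_dch; apply/eqP.
apply: big1 => z _; rewrite dchS; apply: big1 => y _; apply: Hd => // u _.
exact: dch_ge0.
Qed.

Lemma nchains_mono j k : (j <= k)%N -> (0 < nchains T k)%N -> (0 < nchains T j)%N.
Proof.
move=> /subnK <-; elim: (k - j)%N => [|m IH]; first by rewrite add0n.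
move=> H; apply: IH; rewrite lt0n; apply/negP => /eqP E.
by move: H; rewrite addSn nchains_S0.
Qed.

Lemma nchains0 : nchains T 0 = #|T|.
Proof.
apply/eqP; rewrite -(eqr_nat rat) nchains_dch.
under eq_bigr do rewrite dch0.
by rewrite sumr_const.
Qed.

Lemma height_nchains k : (0 < #|T|)%N -> (k <= poset_height T)%N -> (0 < nchains T k)%N.
Proof.
move=> T0 kh.
have [i0 Hi] := bigop.eq_bigmax (fun i : 'I_#|T| => if (0 < nchains T i)%N then val i else 0%N)
  (ltac:(by rewrite card_ord)).
move: kh; rewrite /poset_height Hi.
case: ifP => Hp kh; first exact: nchains_mono kh Hp.
by move: kh; rewrite leqn0 => /eqP ->; rewrite nchains0.
Qed.

Lemma mCDE_Psi : mCDE T -> forall k, Psi k gT = 0.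
Proof.
move=> H k; rewrite /gT PsiB Psi_one.
case: (posnP (nchains T k)) => N0; first by rewrite nchains0_Psi // N0 mulr0 mulr0 subr0.
have := H k (nchains_gt0_height N0); rewrite expect_chain -/avg => <-.
rewrite divfK ?subrr // mulf_neq0 // pnatr_eq0 -lt0n //.
Qed.

Lemma Psi_mCDE : (forall k, Psi k gT = 0) -> mCDE T.
Proof.
move=> H k kh; rewrite expect_chain -/avg.
have := H k; rewrite /gT PsiB Psi_one => /eqP; rewrite subr_eq0 => /eqP ->.
case: (posnP (nchains T k)) => N0.
  rewrite N0 mulr0 invr0 !mulr0.
  case: (posnP #|T|) => T0; last by have := height_nchains T0 kh; rewrite N0.
  rewrite /avg /expect big1 // => x _; by rewrite /uni T0 invr0 mulr0.
by rewrite mulfK // mulf_neq0 // pnatr_eq0 -lt0n.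
Qed.

End Gen.

Section Prod.
Context {dP dQ : Order.disp_t} (P : finPOrderType dP) (Q : finPOrderType dQ).
Local Notation PQ := (P *p Q)%type.
Local Open Scope ring_scope.

Lemma sum_PQ (F : PQ -> rat) : \sum_(x : PQ) F x = \sum_(p : P) \sum_(q : Q) F (p, q).
Proof.
rewrite (pair_big xpredT xpredT (fun p q => F (p, q))) /=.
by apply: eq_bigr => -[].
Qed.

Lemma sum_PQ_cond (A : pred PQ) (F : PQ -> rat) :
  \sum_(x : PQ | A x) F x = \sum_(p : P) \sum_(q : Q | A (p, q)) F (p, q).
Proof.
rewrite big_mkcond sum_PQ; apply: eq_bigr => p _; by rewrite [RHS]big_mkcond.
Qed.

Lemma leEPQ (x y : PQ) : (x <= y)%O = (x.1 <= y.1)%O && (x.2 <= y.2)%O.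
Proof. exact: leEprod. Qed.

Lemma md_prod n (p : P) (q : Q) : @md _ PQ n (p, q) = md n p * md n q.
Proof.
elim: n p q => [|n IH] p q /=; first by rewrite mulr1.
rewrite sum_PQ_cond [X in _ = X * _]big_mkcond mulr_suml; apply: eq_bigr => p' _.
rewrite big_mkcond [X in _ = _ * X]big_mkcond mulr_sumr /=; apply: eq_bigr => q' _.
rewrite leEPQ /= IH; case: (p <= p')%O; case: (q <= q')%O; by rewrite /= ?mul0r ?mulr0.
Qed.

Lemma sum_le_prod (z : PQ) (f : P -> rat) (h : Q -> rat) :
  \sum_(y : PQ | (z <= y)%O) f y.1 * h y.2 =
  (\sum_(y1 | (z.1 <= y1)%O) f y1) * (\sum_(y2 | (z.2 <= y2)%O) h y2).
Proof.
rewrite sum_PQ_cond [X in _ = X * _]big_mkcond mulr_suml; apply: eq_bigr => p' _.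
rewrite big_mkcond [X in _ = _ * X]big_mkcond mulr_sumr /=; apply: eq_bigr => q' _.
rewrite leEPQ /=; case: (z.1 <= p')%O; case: (z.2 <= q')%O; by rewrite /= ?mul0r ?mulr0.
Qed.

Lemma natr_and (a b : bool) : (a && b)%:R = a%:R * b%:R :> rat.
Proof. by case: a; case: b; rewrite ?mulr0 ?mulr1. Qed.

Lemma sum_eq1 (T : finType) (a : T) : \sum_(x : T) (x == a)%:R = 1 :> rat.
Proof.
rewrite (bigD1 a) //= eqxx big1 ?addr0 // => x /negbTE ->; by [].
Qed.

Lemma ME_prod1 n (p : P) (z : PQ) :
  \sum_(q : Q) @ME _ PQ n (p, q) z = ME n p z.1 * md n z.2.
Proof.
elim: n z => [|n IH] [z1 z2] /=.
  under eq_bigr do rewrite xpair_eqE natr_and.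
  by rewrite -mulr_sumr sum_eq1 !mulr1.
rewrite big_split /= exchange_big /=.
under eq_bigr do rewrite IH.
rewrite (sum_le_prod (z1, z2) (fun y1 => ME n p y1) (fun y2 => md n y2)) /=.
under [X in _ + X = _]eq_bigr do rewrite xpair_eqE natr_and.
rewrite -[\sum_(y | (((z1, z2) : PQ) <= y)%O) md n y]/(@md _ PQ n.+1 (z1, z2)) md_prod /=.
under [X in _ + X = _]eq_bigr do rewrite -mulrA.
rewrite -mulr_sumr -mulr_suml sum_eq1 mul1r mulrDl mulrA.
by [].
Qed.

Lemma ME_prod2 n (q : Q) (z : PQ) :
  \sum_(p : P) @ME _ PQ n (p, q) z = md n z.1 * ME n q z.2.
Proof.
elim: n z => [|n IH] [z1 z2] /=.
  under eq_bigr do rewrite xpair_eqE natr_and.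
  by rewrite -mulr_suml sum_eq1.
rewrite big_split /= exchange_big /=.
under eq_bigr do rewrite IH.
rewrite (sum_le_prod (z1, z2) (fun y1 => md n y1) (fun y2 => ME n q y2)) /=.
under [X in _ + X = _]eq_bigr do rewrite xpair_eqE natr_and.
rewrite -[\sum_(y | (((z1, z2) : PQ) <= y)%O) md n y]/(@md _ PQ n.+1 (z1, z2)) md_prod /=.
rewrite -!mulr_suml sum_eq1 mul1r mulrDr; congr (_ + _).
by rewrite mulrCA.
Qed.

Lemma Phi_prod1 n (w : P -> rat) :
  @Phi _ PQ n (fun x => w x.1) = Phi n w * \sum_(z : Q) md n z.
Proof.
rewrite /Phi sum_PQ mulr_suml; apply: eq_bigr => p _ /=.
rewrite exchange_big /= mulr_suml; under eq_bigr do rewrite -mulr_sumr ME_prod1.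
rewrite sum_PQ; apply: eq_bigr => z1 _; rewrite mulr_sumr; apply: eq_bigr => z2 _; by rewrite mulrA.
Qed.

Lemma Phi_prod2 n (w : Q -> rat) :
  @Phi _ PQ n (fun x => w x.2) = (\sum_(z : P) md n z) * Phi n w.
Proof.
rewrite /Phi sum_PQ exchange_big /= mulr_sumr; apply: eq_bigr => q _ /=.
rewrite exchange_big /=; under eq_bigr do rewrite -mulr_sumr ME_prod2.
rewrite sum_PQ mulr_suml; apply: eq_bigr => z1 _. rewrite mulr_sumr.
by apply: eq_bigr => z2 _; rewrite mulrCA.
Qed.

Lemma ltPQ (a b : PQ) :
  (a < b)%O = [&& (a.1 != b.1) || (a.2 != b.2), (a.1 <= b.1)%O & (a.2 <= b.2)%O].
Proof.
case: a b => [a1 a2] [b1 b2]; rewrite lt_neqAle leEPQ /= xpair_eqE negb_and.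
by rewrite andbA.
Qed.

Lemma covers_prod (x1 y1 : P) (x2 y2 : Q) :
  covers ((x1, x2) : PQ) (y1, y2) =
  ((x1 == y1) && covers x2 y2) || ((x2 == y2) && covers x1 y1).
Proof.
rewrite /covers ltPQ /=.
apply/idP/idP.
- move=> /andP [/and3P [ne l1 l2] /forallP H].
  case: (eqVneq x1 y1) => [e1|n1] /=.
    subst x1; move: ne; rewrite eqxx /= => ne.
    apply/orP; left; rewrite lt_neqAle ne l2 /=; apply/forallP => z; apply/negP => /andP [a b].
    have := H (y1, z); rewrite !ltPQ /= lexx.
    move: a b; rewrite !lt_neqAle => /andP [-> ->] /andP [-> ->].
    by rewrite !orbT.
  case: (eqVneq x2 y2) => [e2|n2] /=.
    subst x2; rewrite lt_neqAle eq_sym n1 l1 /=; apply/forallP => z; apply/negP => /andP [a b].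
    have := H (z, y2); rewrite !ltPQ /= lexx.
    move: a b; rewrite !lt_neqAle => /andP [-> ->] /andP [-> ->].
    by [].
  have := H (x1, y2); rewrite !ltPQ /= !lexx l1 l2 eq_sym n1 /=.
  by rewrite eqxx eq_sym n2.
- case/orP => /and3P [/eqP e lt /forallP H]; subst.
    move: (lt); rewrite lt_neqAle => /andP [ne le].
    rewrite ne orbT lexx le /=; apply/forallP => -[z1 z2].
    rewrite !ltPQ /=; apply/negP => /andP [/and3P [n1 a1 a2] /and3P [n3 b1 b2]].
    have ez : z1 = y1 by apply/le_anti; rewrite a1 b1.
    subst z1; move: n1 n3; rewrite eqxx /= => n1 n3.
    have := H z2; rewrite !lt_neqAle n1 n3 a2 b2.
    by [].
  move: (lt); rewrite lt_neqAle => /andP [ne le].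
  rewrite ne lexx le /=; apply/forallP => -[z1 z2].
  rewrite !ltPQ /=; apply/negP => /andP [/and3P [n1 a1 a2] /and3P [n3 b1 b2]].
  have ez : z2 = y2 by apply/le_anti; rewrite a2 b2.
  subst z2; move: n1 n3; rewrite eqxx /= !orbF => n1 n3.
  have := H z1; rewrite !lt_neqAle n1 n3 a1 b1.
  by [].
Qed.

Lemma sum_eqF (T : finType) (a : T) (F : T -> rat) : \sum_x (a == x)%:R * F x = F a.
Proof.
rewrite (bigD1 a) //= eqxx mul1r big1 ?addr0 // => x /negbTE.
by rewrite eq_sym => ->; rewrite mul0r.
Qed.

Lemma covers_irr {d} (T : finPOrderType d) (x : T) : covers x x = false.
Proof. by rewrite /covers ltxx. Qed.

Lemma ddeg_prod (x : PQ) : (ddeg x)%:R = (ddeg x.1)%:R + (ddeg x.2)%:R :> rat.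
Proof.
case: x => x1 x2; rewrite /ddeg !card_sum sum_PQ /=.
have E : forall p q, (covers ((x1, x2) : PQ) (p, q))%:R =
   (x1 == p)%:R * (covers x2 q)%:R + (x2 == q)%:R * (covers x1 p)%:R :> rat.
  move=> p q; rewrite covers_prod.
  case: (eqVneq x1 p) => [<-|_]; case: (eqVneq x2 q) => [<-|_];
    by rewrite /= ?covers_irr ?mul1r ?mul0r ?addr0 ?add0r ?orbF.
under eq_bigr do (under eq_bigr do rewrite E; rewrite big_split /=).
rewrite big_split /= addrC; congr (_ + _).
  by apply: eq_bigr => p _; rewrite (sum_eqF x2 (fun _ => (covers x1 p)%:R)).
under eq_bigr do rewrite -mulr_sumr.
by rewrite sum_eqF.
Qed.

Lemma avg_aux (I J : finType) (f : I -> rat) (g : J -> rat) :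
  (#|I|%:R : rat) != 0 -> (#|J|%:R : rat) != 0 ->
  (\sum_i f i *+ #|J| + \sum_j g j *+ #|I|) / (#|I| * #|J|)%:R =
  (\sum_i f i) / #|I|%:R + (\sum_j g j) / #|J|%:R.
Proof.
move=> nI nJ; rewrite sumrMnl [X in _ + X]sumrMnl natrM.
move: nI nJ; move: (\sum_i f i) (\sum_j g j) #|I| #|J| => a b m n nm nn.
by field; rewrite nm nn.
Qed.

Lemma avg_prod (p : P) (q : Q) : avg PQ = avg P + avg Q.
Proof.
have hP : (0 < #|P|)%N by apply/card_gt0P; exists p.
have hQ : (0 < #|Q|)%N by apply/card_gt0P; exists q.
rewrite /avg /expect /uni -!mulr_suml.
rewrite card_prod.
rewrite sum_PQ.
under eq_bigr do (under eq_bigr do rewrite ddeg_prod /=; rewrite big_split /= sumr_const).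
rewrite big_split /= exchange_big /=.
under [X in _ + X]eq_bigr do rewrite sumr_const.
apply: avg_aux; rewrite pnatr_eq0 -lt0n //.
Qed.
End Prod.

Theorem proposition2p9 (dP dQ : Order.disp_t)
  (P : finPOrderType dP) (Q : finPOrderType dQ) :
  mCDE P -> mCDE Q -> mCDE (P *p Q)%type.
Proof.
move=> HP HQ; apply: Psi_mCDE => k.
have gs : forall x : (P *p Q)%type, gT x = (gT x.1 + gT x.2)%R.
  move=> [p q]; rewrite /gT ddeg_prod (avg_prod p q) /=.
  by rewrite GRing.opprD GRing.addrACA.
have -> : Psi k (@gT _ (P *p Q)%type) =
   (Psi k (fun x : (P *p Q)%type => gT x.1) + Psi k (fun x : (P *p Q)%type => gT x.2))%R.
  rewrite /Psi -big_split; apply: eq_bigr => x _; rewrite -big_split; apply: eq_bigr => z _.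
  by rewrite gs GRing.mulrDl.
have h1 : Psi k (fun x : (P *p Q)%type => gT x.1) = 0%R.
  apply: Psi_zero => n; rewrite Phi_prod1 Phi_Psi big1 ?GRing.mul0r // => j _.
  by rewrite (mCDE_Psi HP) GRing.mulr0.
have h2 : Psi k (fun x : (P *p Q)%type => gT x.2) = 0%R.
  apply: Psi_zero => n; rewrite Phi_prod2 Phi_Psi [X in (_ * X)%R]big1 ?GRing.mulr0 // => j _.
  by rewrite (mCDE_Psi HQ) GRing.mulr0.
by rewrite h1 h2 GRing.addr0.
Qed.
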